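(* For every epistemic transition system, every history $h$ of it, all coalitions $D\subseteq C$ with $C\neq\varnothing$ and every formula $\phi\in\Phi$: if $h\Vdash\mathsf{H}_D\phi$, then $h\Vdash\mathsf{H}_D\mathsf{K}_C\phi$.
   Context: Fix a set of agents $\mathcal{A}$; a coalition is a subset of $\mathcal{A}$. Language $\Phi$: $\phi ::= p \mid \neg\phi \mid \phi\to\phi \mid \mathsf{K}_C\phi \mid \mathsf{H}_C\phi$ ($C\subseteq\mathcal{A}$). An epistemic transition system is a tuple $(W,\{\sim_a\}_{a\in\mathcal{A}},V,M,\pi)$ with $W$ a set of states, each $\sim_a$ an equivalence relation on $W$, $V$ a nonempty set, $M\subseteq W\times V^{\mathcal{A}}\times W$, $\pi$ mapping propositional variables to subsets of $W$. For profiles $\mathbf{s}_1\in V^{C_1},\mathbf{s}_2\in V^{C_2}$ and $C\subseteq C_1\cap C_2$, $\mathbf{s}_1=_C\mathbf{s}_2$ means $(\mathbf{s}_1)_a=(\mathbf{s}_2)_a$ for all $a\in C$. A history is a sequence $(w_0,\mathbf{s}_1,w_1,\dots,\mathbf{s}_n,w_n)$, $n\ge0$, with $w_i\in W$, $\mathbf{s}_i\in V^{\mathcal{A}}$, $(w_i,\mathbf{s}_{i+1},w_{i+1})\in M$; $hd(h)$ is its last element, and $h::\mathbf{s}::w$ denotes extension. $h\approx_a h'$ iff the histories have the same length $n$, their $i$-th states are $\sim_a$-related for all $i$, and their $i$-th profiles agree at $a$ for all $i$; $h\approx_C h'$ iff $h\approx_a h'$ for all $a\in C$. Satisfaction: $h\Vdash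 p$ iff $hd(h)\in\pi(p)$; Boolean clauses standard; $h\Vdash\mathsf{K}_C\phi$ iff $h'\Vdash\phi$ for all histories $h'$ with $h\approx_C h'$; $h\Vdash\mathsf{H}_C\phi$ iff there is $\mathbf{s}\in V^C$ such that for every history $h'::\mathbf{s}'::w'$ with $h\approx_C h'$ and $\mathbf{s}=_C\mathbf{s}'$, $h'::\mathbf{s}'::w'\Vdash\phi$. *)

(* Defs.v *)
From Stdlib Require Import List.
Import ListNotations.
Set Implicit Arguments.

Definition coalition (Agent : Type) := Agent -> Prop.

Inductive formula (Agent : Type) : Type :=
| FVar : nat -> formula Agent
| FNot : formula Agent -> formula Agent
| FImp : formula Agent -> formula Agent -> formula Agent
| FK : coalition Agent -> formula Agent -> formula Agent
| FH : coalition Agent -> formula Agent -> formula Agent.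

Arguments FVar {Agent} _.

Record ETS (Agent : Type) := {
  ets_W : Type;
  ets_sim : Agent -> ets_W -> ets_W -> Prop;
  ets_sim_equiv : forall a,
      (forall w, ets_sim a w w) /\
      (forall w u, ets_sim a w u -> ets_sim a u w) /\
      (forall w u v, ets_sim a w u -> ets_sim a u v -> ets_sim a w v);
  ets_V : Type;
  ets_V_nonempty : inhabited ets_V;
  ets_M : ets_W -> (Agent -> ets_V) -> ets_W -> Prop;
  ets_pi : nat -> ets_W -> Prop
}.

Section Semantics.
Variable Agent : Type.
Variable E : ETS Agent.

Notation W := (ets_W E).
Notation V := (ets_V E).
Definition profile := Agent -> V.

(* A (pre)history (w0, [(s1,w1); ...; (sn,wn)]). *)
Definition hist : Type := (W * list (profile * W))%type.

Fixpoint valid_from (w : W) (l : list (profile * W)) : Prop :=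
  match l with
  | [] => True
  | (s, w') :: l' => ets_M E w s w' /\ valid_from w' l'
  end.

Definition is_history (h : hist) : Prop := valid_from (fst h) (snd h).

Definition hd (h : hist) : W := last (map snd (snd h)) (fst h).

Definition ext (h : hist) (s : profile) (w : W) : hist :=
  (fst h, snd h ++ [(s, w)]).

Definition eq_on (C : coalition Agent) (s1 s2 : profile) : Prop :=
  forall a, C a -> s1 a = s2 a.

Definition indist_a (a : Agent) (h h' : hist) : Prop :=
  ets_sim E a (fst h) (fst h') /\
  Forall2 (fun p q => fst p a = fst q a /\ ets_sim E a (snd p) (snd q))
          (snd h) (snd h').

Definition indist (C : coalition Agent) (h h' : hist) : Prop :=
  forall a, C a -> indist_a a h h'.

Fixpoint sat (h : hist) (phi : formula Agent) : Prop :=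
  match phi with
  | FVar p => ets_pi E p (hd h)
  | FNot psi => ~ sat h psi
  | FImp psi chi => sat h psi -> sat h chi
  | FK C psi => forall h', is_history h' -> indist C h h' -> sat h' psi
  | FH C psi =>
      exists s : profile, forall h' s' w',
        is_history h' -> is_history (ext h' s' w') ->
        indist C h h' -> eq_on C s s' -> sat (ext h' s' w') psi
  end.

End Semantics.

(* Main.v *)
Require Import Defs.
From Stdlib Require Import List.
Import ListNotations.

Lemma valid_app (Agent : Type) (E : ETS Agent) w (l1 l2 : list (profile E * ets_W E)) :
  @valid_from _ E w (l1 ++ l2) -> @valid_from _ E w l1.
Proof.
  revert w; induction l1 as [|[s u] l IH]; simpl; intros w H; [exact I|].
  destruct H as [H1 H2]; split; auto.
Qed.

Lemma Forall2_app_tail (A B : Type) (R : A -> B -> Prop) l1 l2 x y :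
  Forall2 R (l1 ++ [x]) (l2 ++ [y]) -> Forall2 R l1 l2 /\ R x y.
Proof.
  revert l2; induction l1 as [|a l1 IH]; intros l2 H; destruct l2 as [|b l2]; simpl in *.
  - inversion H; subst; auto.
  - inversion H; subst. apply Forall2_length in H5. rewrite length_app in H5; simpl in H5. 
    exfalso; destruct l2; simpl in *; discriminate.
  - inversion H; subst. apply Forall2_length in H5. rewrite length_app in H5; simpl in H5.
    exfalso; destruct l1; simpl in *; discriminate.
  - inversion H; subst. destruct (IH _ H5). split; auto.
Qed.

Lemma Forall2_trans3 (A B C : Type) (R1 : A -> B -> Prop) (R2 : B -> C -> Prop)
  (R3 : A -> C -> Prop) l1 l2 l3 :
  (forall a b c, R1 a b -> R2 b c -> R3 a c) ->
  Forall2 R1 l1 l2 -> Forall2 R2 l2 l3 -> Forall2 R3 l1 l3.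
Proof.
  intros HT H1; revert l3; induction H1; intros l3 H2; inversion H2; subst; constructor; eauto.
Qed.

Theorem lemma13 (Agent : Type) (E : ETS Agent) (h : hist E)
  (C D : coalition Agent) (phi : formula Agent) :
  is_history h ->
  (forall a, D a -> C a) ->
  (exists a, C a) ->
  sat h (FH D phi) ->
  sat h (FH D (FK C phi)).
Proof.
  intros Hh HDC [a0 Ca0] [s Hs]. exists s.
  intros h' s' w' Hh' Hext HD Heq h'' Hh'' HC. simpl.
  destruct h'' as [u0 l''].
  pose proof (HC a0 Ca0) as [_ F0]. unfold ext in F0; simpl in F0.
  destruct (Forall2_app_inv_l _ _ F0) as [l1 [l2 [_ [F2 El]]]].
  inversion F2; subst. inversion H3; subst. destruct y as [s'' w''].
  assert (Hall : forall a, C a -> @indist_a _ E a h' (u0, l1) /\ s' a = s'' a).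
  { intros a Ca. destruct (HC a Ca) as [Hf Hl]. simpl in *.
    apply Forall2_app_tail in Hl as [Hl [Hx _]]. simpl in Hx.
    split; [split|]; auto. }
  assert (Hv : @is_history _ E (u0, l1)).
  { unfold is_history in *; simpl in *. eapply valid_app; eauto. }
  assert (Hv2 : @is_history _ E (@ext _ E (u0, l1) s'' w'')) by exact Hh''.
  specialize (Hs (u0, l1) s'' w'' Hv Hv2).
  apply Hs.
  - intros a Da. destruct (HD a Da) as [A1 A2]. destruct (proj1 (Hall a (HDC a Da))) as [B1 B2].
    destruct (ets_sim_equiv E a) as [_ [_ Tr]].
    split; [eauto|]. eapply Forall2_trans3; [|exact A2|exact B2].
    intros [] [] [] [] []; simpl in *; split; [congruence|eauto].
  - intros a Da. rewrite (Heq a Da). apply (Hall a (HDC a Da)).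
Qed.
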